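(* A replicated system $\mathcal P$ satisfies a stable termination property $\Pi$ if and only if $\mathcal P$ has a stage graph for $\Pi$.
   Context: A replicated system of arity $n$ is $\mathcal P=(Q,T)$ with $Q$ finite and $T\subseteq\bigcup_{k=0}^n Q^{(k)}\times Q^{(k)}$ ($Q^{(k)}$: multisets over $Q$ of size $k$) containing all silent transitions $(\vec x,\vec x)$. For $t=(\vec x,\vec y)$: $\mathrm{pre}(t)=\vec x$, $\Delta(t)=\vec y-\vec x$. Configurations are $C\in\mathbb N^Q$; $t$ is enabled at $C$ if $C\ge\mathrm{pre}(t)$ and then $C\xrightarrow{t}C+\Delta(t)$; $\to$ is the union over $t$, $\xrightarrow{*}$ its reflexive-transitive closure. A run is an infinite sequence $C_0t_1C_1\cdots$ of steps; it is fair if for every possible step $C\xrightarrow{t}C'$, if $C$ occurs infinitely often then the segment $C\,t\,C'$ occurs infinitely often. Presburger formulas over $Q$ define sets $[\![\phi]\!]\subseteq\mathbb N^Q$. A stable termination property is $\Pi=(\phi_{pre},\{\phi^1_{post},\dots,\phi^k_{post}\})$ with all components Presburger formulas over $Q$; $\mathcal P$ satisfies $\Pi$ if every fair run starting at a configuration of $[\![\phi_{pre}]\!]$ satisfies $\Diamond\bigvee_{i=1}^k\Box\phi^i_{post}$ (i.e.\ from some point on all configurations satisfy $\phi^i_{post}$ for some fixed $i$). A set $\mathcal C$ is inductive if $C\in\mathcal C$, $C\to C'$ imply $C'\in\mathcal C$. A certificate for $\mathcal C\leadsto\mathcal C'$ is $f:\mathcal C\to\mathbb N$ such that every $C\in\mathcal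 C\setminus\mathcal C'$ has an execution $C\xrightarrow{*}D$, $D\in\mathcal C$, $f(C)>f(D)$. A set $\mathcal C$ satisfies $\phi^i_{post}$ if every configuration of $\mathcal C$ satisfies it (for inductive $\mathcal C$ this is the same as satisfying $\Box\phi^i_{post}$). A stage graph of $\mathcal P$ for $\Pi$ is a finite directed acyclic graph whose nodes (stages) are sets of configurations such that: (1) every stage is inductive; (2) every configuration of $[\![\phi_{pre}]\!]$ belongs to some stage; (3) for every non-terminal stage $\mathcal C$ with successors $\mathcal C_1,\dots,\mathcal C_n$ there is a certificate for $\mathcal C\leadsto(\mathcal C_1\cup\dots\cup\mathcal C_n)$; (4) every terminal stage satisfies $\phi^i_{post}$ for some $i$. *)

(* Defs.v *)
From mathcomp Require Import all_boot.
From Stdlib Require Import Relations.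
From Stdlib Require Lists.List.
Set Implicit Arguments. Unset Strict Implicit. Unset Printing Implicit Defensive.

Definition conf (Q : finType) := {ffun Q -> nat}.
Definition msize (Q : finType) (x : conf Q) : nat := \sum_(q : Q) x q.

Definition transition (Q : finType) := (conf Q * conf Q)%type.
Definition pre (Q : finType) (t : transition Q) : conf Q := t.1.
Definition post (Q : finType) (t : transition Q) : conf Q := t.2.

Record replicated_system (n : nat) := RepSys {
  rs_Q : finType;
  rs_T : transition rs_Q -> Prop;
  rs_T_size : forall t, rs_T t ->
     msize (pre t) <= n /\ msize (post t) = msize (pre t);
  rs_T_silent : forall x : conf rs_Q, msize x <= n -> rs_T (x, x)
}.

Section Semantics.
Variables (n : nat) (P : replicated_system n).
Local Notation Q := (rs_Q P).

Definition enabled (t : transition Q) (C : conf Q) : Prop :=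
  forall q, pre t q <= C q.

Definition step (C : conf Q) (t : transition Q) (C' : conf Q) : Prop :=
  @rs_T _ P t /\ enabled t C /\ forall q, C' q = C q - pre t q + post t q.

Definition step_rel (C C' : conf Q) : Prop := exists t, step C t C'.
Definition reach : relation (conf Q) := clos_refl_trans _ step_rel.

Record run := Run {
  run_conf : nat -> conf Q;
  run_trans : nat -> transition Q;
  run_steps : forall i, step (run_conf i) (run_trans i) (run_conf i.+1)
}.

Definition inf_often (p : nat -> Prop) : Prop := forall N, exists i, N <= i /\ p i.

Definition fair (r : run) : Prop :=
  forall C t C', step C t C' ->
    inf_often (fun i => run_conf r i = C) ->
    inf_often (fun i => [/\ run_conf r i = C, run_trans r i = t
                          & run_conf r i.+1 = C']).
End Semantics.
Arguments run {n} P.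
Arguments fair {n P} r.

(* Free variables are the states q : Q (interpreted as C q); bound variables
   are de Bruijn indices ranging over N. *)
Inductive pterm (Q : Type) :=
| PVar of Q
| PBnd of nat
| PConst of nat
| PAdd of pterm Q & pterm Q
| PScale of nat & pterm Q.

Inductive pform (Q : Type) :=
| PLe of pterm Q & pterm Q
| PEq of pterm Q & pterm Q
| PTrue
| PNot of pform Q
| PAnd of pform Q & pform Q
| POr of pform Q & pform Q
| PEx of pform Q
| PAll of pform Q.

Fixpoint teval (Q : finType) (C : conf Q) (e : nat -> nat) (t : pterm Q) : nat :=
  match t with
  | PVar q => C q
  | PBnd i => e i
  | PConst c => c
  | PAdd t1 t2 => teval C e t1 + teval C e t2
  | PScale k t1 => k * teval C e t1
  end.

Definition scons (v : nat) (e : nat -> nat) : nat -> nat :=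
  fun i => if i is j.+1 then e j else v.

Fixpoint fholds (Q : finType) (C : conf Q) (e : nat -> nat) (f : pform Q) : Prop :=
  match f with
  | PLe t1 t2 => teval C e t1 <= teval C e t2
  | PEq t1 t2 => teval C e t1 = teval C e t2
  | PTrue => True
  | PNot g => ~ fholds C e g
  | PAnd g h => fholds C e g /\ fholds C e h
  | POr g h => fholds C e g \/ fholds C e h
  | PEx g => exists v, fholds C (scons v e) g
  | PAll g => forall v, fholds C (scons v e) g
  end.

(* [[phi]] : the set of configurations satisfying phi (bound vars start at 0,
   irrelevant for closed formulas). *)
Definition psem (Q : finType) (phi : pform Q) (C : conf Q) : Prop :=
  fholds C (fun _ => 0) phi.

Record stable_term_prop (Q : finType) := STP {
  phi_pre : pform Q;
  phi_posts : seq (pform Q)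
}.

Definition satisfies (n : nat) (P : replicated_system n)
    (Pi : stable_term_prop (rs_Q P)) : Prop :=
  forall r : run P, fair r -> psem (phi_pre Pi) (run_conf r 0) ->
    exists N, exists2 phi, Stdlib.Lists.List.In phi (phi_posts Pi) &
      forall m, N <= m -> psem phi (run_conf r m).

Section Stages.
Variables (n : nat) (P : replicated_system n).
Local Notation Q := (rs_Q P).

Definition inductive (S : conf Q -> Prop) : Prop :=
  forall C C', S C -> step_rel C C' -> S C'.

Definition certificate (S S' : conf Q -> Prop) (f : conf Q -> nat) : Prop :=
  forall C, S C -> ~ S' C ->
    exists D, [/\ reach C D, S D & f D < f C].

Definition set_satisfies (S : conf Q -> Prop) (phi : pform Q) : Prop :=
  forall C, S C -> psem phi C.

Local Unset Implicit Arguments.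
Record stage_graph := StageGraph {
  sg_size : nat;
  sg_stage : 'I_sg_size -> conf Q -> Prop;
  sg_edge : 'I_sg_size -> 'I_sg_size -> Prop
}.

Local Set Implicit Arguments.
Definition acyclic (m : nat) (E : 'I_m -> 'I_m -> Prop) : Prop :=
  forall i, ~ clos_trans _ E i i.

Definition is_stage_graph (Pi : stable_term_prop Q) (G : stage_graph) : Prop :=
  [/\ acyclic (sg_edge G),
      (forall i, inductive (sg_stage G i)),
      (forall C, psem (phi_pre Pi) C -> exists i, sg_stage G i C),
      (forall i, (exists j, sg_edge G i j) ->
          exists f, certificate (sg_stage G i)
                      (fun C => exists j, sg_edge G i j /\ sg_stage G j C) f)
    & (forall i, (forall j, ~ sg_edge G i j) ->
          exists2 phi, Stdlib.Lists.List.In phi (phi_posts Pi) & set_satisfies (sg_stage G i) phi)].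

Definition has_stage_graph (Pi : stable_term_prop Q) : Prop :=
  exists G, is_stage_graph Pi G.
End Stages.

(* Main.v *)
Require Import Defs.
From mathcomp Require Import all_boot.
From Stdlib Require Import Relations Classical ClassicalEpsilon Lia.
From mathcomp Require Import zify.
Set Implicit Arguments. Unset Strict Implicit. Unset Printing Implicit Defensive.

Definition cdec (A : Prop) : bool := if excluded_middle_informative A then true else false.
Lemma cdecP (A : Prop) : reflect A (cdec A).
Proof. rewrite /cdec; case: excluded_middle_informative => h; by constructor. Qed.

Lemma step_msize n (P : replicated_system n) C t C' :
  @step n P C t C' -> msize C' = msize C.
Proof.
case=> [hT [hen heq]]; have [_ hs] := rs_T_size hT.
rewrite /msize.
have -> : \sum_q C' q = \sum_q (C q - pre t q + post t q).
  by apply: eq_bigr => q _; rewrite heq.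
rewrite big_split /=.
have : \sum_q (C q - pre t q) + \sum_q pre t q = \sum_q C q.
  by rewrite -big_split /=; apply: eq_bigr => q _; rewrite subnK.
rewrite /msize in hs; lia.
Qed.

Lemma reach_msize n (P : replicated_system n) C D :
  @reach n P C D -> msize D = msize C.
Proof.
elim=> [x y [t h]|x|x y z _ h1 _ h2]; first exact: step_msize h.
- by []. - by rewrite h2 h1.
Qed.

Lemma msize_bound (Q : finType) (C : conf Q) q : C q <= msize C.
Proof. by rewrite /msize (bigD1 q) //= leq_addr. Qed.

Definition enc (Q : finType) (s : nat) (C : conf Q) : {ffun Q -> 'I_s.+1} :=
  [ffun q => inord (C q)].
Definition dcd (Q : finType) (s : nat) (x : {ffun Q -> 'I_s.+1}) : conf Q :=
  [ffun q => nat_of_ord (x q)].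
Lemma dcd_enc (Q : finType) s (C : conf Q) : msize C = s -> dcd (enc s C) = C.
Proof.
move=> hs; apply/ffunP => q; rewrite !ffunE inordK //.
by rewrite ltnS -hs msize_bound.
Qed.

Lemma pigeon (T : finType) (g : nat -> T) : exists x, inf_often (fun i => g i = x).
Proof.
apply: NNPP => H.
have H' : forall x, exists N, forall i, N <= i -> g i <> x.
  move=> x; apply: NNPP => Hx; apply: H; exists x => N.
  apply: NNPP => HN; apply: Hx; exists N => i Hi Hg; apply: HN; by exists i.
pose Nf x := proj1_sig (constructive_indefinite_description _ (H' x)).
have HN x : forall i, Nf x <= i -> g i <> x.
  exact: (proj2_sig (constructive_indefinite_description _ (H' x))).
pose M := \max_(x : T) Nf x.
apply: (HN (g M) M) => //.
rewrite /M; exact: leq_bigmax.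
Qed.

Lemma run_reach n (P : replicated_system n) (r : run P) i j : i <= j ->
  reach (run_conf r i) (run_conf r j).
Proof.
move=> /subnK <-; elim: (j - i) => [|k IH]; first exact: rt_refl.
apply: rt_trans IH _; apply: rt_step; exists (run_trans r (k + i)).
exact: run_steps.
Qed.

Lemma run_stay n (P : replicated_system n) (r : run P) (S : conf (rs_Q P) -> Prop) i j :
  inductive S -> S (run_conf r i) -> i <= j -> S (run_conf r j).
Proof.
move=> hS hi /subnK <-; elim: (j - i) => [|k IH] //.
apply: (hS _ _ IH); exists (run_trans r (k + i)); exact: run_steps.
Qed.

Lemma fair_reach n (P : replicated_system n) (r : run P) C D : fair r ->
  inf_often (fun i => run_conf r i = C) -> reach C D ->
  inf_often (fun i => run_conf r i = D).
Proof.
move=> hf hC hCD; elim: hCD hC => [x y [t hs]|x|x y z _ h1 _ h2] hx; last 2 first.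
- done.
- exact: h2 (h1 hx).
move=> N; have [i [hi [_ _ h]]] := hf _ _ _ hs hx N.
by exists i.+1; split=> //; apply: leqW.
Qed.

Lemma some_inf n (P : replicated_system n) (r : run P) :
  exists C, inf_often (fun i => run_conf r i = C).
Proof.
set s := msize (run_conf r 0).
have [x hx] := pigeon (fun i => enc s (run_conf r i)).
exists (dcd x) => N; have [i [hi he]] := hx N; exists i; split => //.
rewrite -he dcd_enc //; apply: reach_msize; exact: run_reach.
Qed.

Lemma escape n (P : replicated_system n) (r : run P) (S U : conf (rs_Q P) -> Prop) f t :
  fair r -> inductive S -> S (run_conf r t) -> certificate S U f ->
  exists t', U (run_conf r t').
Proof.
move=> hf hS ht hc; apply: NNPP => hU.
pose Inf C := inf_often (fun i => run_conf r i = C).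
have hex : exists k, cdec (exists C, Inf C /\ f C = k).
  have [C hC] := some_inf r; exists (f C); apply/cdecP; by exists C.
case: (ex_minnP hex) => k hk hmin; move: hk => /cdecP [C [hC hfC]]; subst k.
have [i [hi hiC]] := hC t.
have SC : S C by rewrite -hiC; exact: run_stay ht hi.
have UC : ~ U C by move=> h; apply: hU; exists i; rewrite hiC.
have [D [hCD SD hlt]] := hc C SC UC.
suff: f C <= f D by rewrite leqNgt hlt.
apply: hmin.
apply/cdecP; exists D; split => //; exact: fair_reach hCD.
Qed.

Lemma acyc_cnt (m : nat) (E : 'I_m -> 'I_m -> Prop) i j : acyclic E -> E i j ->
  #|[set x | cdec (clos_trans _ E j x)]| < #|[set x | cdec (clos_trans _ E i x)]|.
Proof.
move=> hac hij; apply: proper_card; apply/properP; split.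
  apply/subsetP => x; rewrite !inE => /cdecP h; apply/cdecP.
  exact: t_trans (t_step _ _ _ _ hij) h.
exists j; rewrite !inE; first by apply/cdecP; exact: t_step.
by apply/cdecP; apply: hac.
Qed.

Lemma dir1 n (P : replicated_system n) (Pi : stable_term_prop (rs_Q P)) (G : stage_graph n P) :
  is_stage_graph Pi G -> satisfies Pi.
Proof.
case=> hac hind hpre hcert hterm r hf h0.
have [i0 hi0] := hpre _ h0.
pose cnt i := #|[set x | cdec (clos_trans _ (sg_edge n P G) i x)]|.
suff key : forall k i t, cnt i < k -> sg_stage n P G i (run_conf r t) ->
  exists N, exists2 phi, Stdlib.Lists.List.In phi (phi_posts Pi) &
      forall m, N <= m -> psem phi (run_conf r m).
  exact: (key (cnt i0).+1 i0 0).
elim=> [//|k IH] i t hk ht.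
case: (classic (exists j, sg_edge n P G i j)) => hE.
  have [f hc] := hcert i hE.
  have [t' [j [hij hj]]] := escape hf (hind i) ht hc.
  apply: (IH j t') => //.
  have := acyc_cnt hac hij; rewrite -/(cnt j) -/(cnt i); lia.
have [phi hin hphi] := hterm i (fun j h => hE (ex_intro _ j h)).
exists t, phi => // m hm; apply: hphi; exact: run_stay ht hm.
Qed.

Definition zc (Q : finType) : conf Q := [ffun => 0].

Lemma silent_step n (P : replicated_system n) (D : conf (rs_Q P)) :
  step D (zc _, zc _) D.
Proof.
split; first by apply: rs_T_silent; rewrite /msize big1 // => q _; rewrite ffunE.
split; first by move=> q; rewrite /pre /= ffunE.
by move=> q; rewrite /pre /post /= ffunE subn0 addn0.
Qed.

Fixpoint rn n (P : replicated_system n) (k : nat) (C D : conf (rs_Q P)) : Prop :=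
  if k is k'.+1 then exists E, step_rel C E /\ rn k' E D else C = D.

Lemma rn_cat n (P : replicated_system n) a b (C E D : conf (rs_Q P)) :
  rn a C E -> rn b E D -> rn (a + b) C D.
Proof.
elim: a C => [|a IH] C /=; first by move=> ->.
by move=> [F [hCF hF]] hE; exists F; split => //; apply: IH hF hE.
Qed.

Lemma reach_rn n (P : replicated_system n) (C D : conf (rs_Q P)) :
  reach C D -> exists k, rn k C D.
Proof.
elim=> [x y h|x|x y z _ [a ha] _ [b hb]].
- by exists 1; exists y.
- by exists 0.
- by exists (a + b); apply: rn_cat ha hb.
Qed.

Lemma rn_reach n (P : replicated_system n) k (C D : conf (rs_Q P)) :
  rn k C D -> reach C D.
Proof.
elim: k C => [|k IH] C /=; first by move=> ->; apply: rt_refl.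
move=> [E [h1 h2]]; apply: rt_trans (rt_step _ _ _ _ h1) (IH _ h2).
Qed.

Definition dist n (P : replicated_system n) (C D : conf (rs_Q P)) : nat :=
  match excluded_middle_informative (exists k, cdec (rn k C D)) with
  | left H => ex_minn H | right _ => 0 end.

Lemma dist_spec n (P : replicated_system n) k (C D : conf (rs_Q P)) :
  rn k C D -> rn (dist C D) C D /\ dist C D <= k.
Proof.
move=> h; rewrite /dist; case: excluded_middle_informative => [H|H]; last first.
  by exfalso; apply: H; exists k; apply/cdecP.
case: (ex_minnP H) => m /cdecP hm hmin; split => //; apply: hmin; exact/cdecP.
Qed.

Lemma dist_next n (P : replicated_system n) (C S : conf (rs_Q P)) :
  reach C S -> C <> S ->
  exists t D, step C t D /\ reach D S /\ dist D S < dist C S.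
Proof.
move=> /reach_rn [k hk] hne; have [h1 _] := dist_spec hk.
move: h1; case: (dist C S) => [/= //|d] /= [E [[t hs] hE]].
exists t, E; split => //; split; first exact: rn_reach hE.
by have [_ ] := dist_spec hE.
Qed.

Definition trip n (P : replicated_system n) :=
  (conf (rs_Q P) * transition (rs_Q P) * conf (rs_Q P))%type.

Definition nspec n (P : replicated_system n) (e : nat -> option (trip P))
  (st : conf (rs_Q P) * nat) (res : transition (rs_Q P) * (conf (rs_Q P) * nat)) : Prop :=
  [/\ step st.1 res.1 res.2.1,
   (forall S t S', e st.2 = Some (S, t, S') -> step S t S' -> reach st.1 S ->
    (st.1 = S /\ res.1 = t /\ res.2.1 = S' /\ res.2.2 = st.2.+1) \/
    (res.2.2 = st.2 /\ reach res.2.1 S /\ dist res.2.1 S < dist st.1 S)) &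
   (res.2.2 = st.2.+1 \/ (res.2.2 = st.2 /\
      exists S t S', [/\ e st.2 = Some (S, t, S'), step S t S' & reach st.1 S]))].

Lemma nspec_ex n (P : replicated_system n) e st : exists res, @nspec n P e st res.
Proof.
case: (classic (exists S t S', [/\ e st.2 = Some (S, t, S'), step S t S' & reach st.1 S])).
  move=> [S [t [S' [he hs hr]]]].
  case: (classic (st.1 = S)) => hS.
    exists (t, (S', st.2.+1)); split => //=; first by rewrite hS.
    - move=> S1 t1 S1'; rewrite he => -[<- <- <-] _ _; by left.
    - by left.
  have [t' [D [h1 [h2 h3]]]] := dist_next hr hS.
  exists (t', (D, st.2)); split => //=.
  - move=> S1 t1 S1'; rewrite he => -[<- <- <-] _ _; by right.
  - right; split => //; by exists S, t, S'.
move=> hnv; exists ((zc _, zc _), (st.1, st.2.+1)); split => /=.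
- exact: silent_step.
- move=> S t S' h1 h2 h3; exfalso; apply: hnv; by exists S, t, S'.
- by left.
Qed.

Definition nxt n (P : replicated_system n) e st :=
  proj1_sig (constructive_indefinite_description _ (@nspec_ex n P e st)).
Lemma nxtP n (P : replicated_system n) e st : nspec e st (@nxt n P e st).
Proof. exact: (proj2_sig (constructive_indefinite_description _ _)). Qed.

Definition sq n (P : replicated_system n) e (C0 : conf (rs_Q P)) (i : nat) :=
  iter i (fun s => (@nxt n P e s).2) (C0, 0).

Lemma sq_steps n (P : replicated_system n) e C0 i :
  step (@sq n P e C0 i).1 (nxt e (sq e C0 i)).1 (sq e C0 i.+1).1.
Proof. by case: (nxtP e (sq e C0 i)). Qed.

Definition mkrun n (P : replicated_system n) e C0 : run P :=
  Run (@sq_steps n P e C0).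

Lemma sqS n (P : replicated_system n) e C0 i :
  @sq n P e C0 i.+1 = (nxt e (sq e C0 i)).2.
Proof. by []. Qed.

Lemma L1 n (P : replicated_system n) e C0 k : forall i S t S',
  e (@sq n P e C0 i).2 = Some (S, t, S') -> step S t S' -> reach (sq e C0 i).1 S ->
  dist (sq e C0 i).1 S <= k ->
  exists i', [/\ i <= i', (sq e C0 i').1 = S, (nxt e (sq e C0 i')).1 = t,
     (sq e C0 i'.+1).1 = S' & (sq e C0 i'.+1).2 = (sq e C0 i).2.+1].
Proof.
elim: k => [|k IH] i S t S' he hs hr hd;
  case: (nxtP e (sq e C0 i)) => _ /(_ S t S' he hs hr) [[h1 [h2 [h3 h4]]]|[h1 [h2 h3]]] _.
- by exists i; rewrite sqS h3 h4.
- lia.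
- by exists i; rewrite sqS h3 h4.
- have he' : e (sq e C0 i.+1).2 = Some (S, t, S') by rewrite sqS h1.
  have hr' : reach (sq e C0 i.+1).1 S by rewrite sqS.
  have hd' : dist (sq e C0 i.+1).1 S <= k by rewrite sqS; lia.
  have [i' [a b c d f]] := IH i.+1 S t S' he' hs hr' hd'.
  exists i'; split => //; first lia.
  by rewrite f sqS h1.
Qed.

Lemma L2 n (P : replicated_system n) e C0 i :
  exists i', i < i' /\ (@sq n P e C0 i').2 = (sq e C0 i).2.+1.
Proof.
case: (nxtP e (sq e C0 i)) => _ _ [h|[_ [S [t [S' [he hs hr]]]]]].
  by exists i.+1; rewrite sqS h.
have [k hk] := reach_rn hr; have [_ hd] := dist_spec hk.
have [i' [a _ _ _ f]] := L1 he hs hr hd.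
by exists i'.+1; split => //; lia.
Qed.

Lemma L3 n (P : replicated_system n) e C0 m i :
  exists i', i <= i' /\ (@sq n P e C0 i').2 = (sq e C0 i).2 + m.
Proof.
elim: m => [|m [i1 [h1 h2]]]; first by exists i; rewrite addn0.
have [i2 [h3 h4]] := L2 e C0 i1.
exists i2; split; first lia.
by rewrite h4 h2 addnS.
Qed.

Lemma logn2 a b : logn 2 (2 ^ a * (2 * b).+1) = a.
Proof.
rewrite lognM ?expn_gt0 // pfactorK // logn_coprime ?addn0 //.
rewrite coprime2n /= oddM /=; done.
Qed.

Definition eB n (P : replicated_system n) (B : conf (rs_Q P)) (j : nat) : option (trip P) :=
  if j is j'.+1 then unpickle (logn 2 j') else Some (B, (zc _, zc _), B).

Lemma bottom n (P : replicated_system n) (C : conf (rs_Q P)) :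
  exists B, reach C B /\ forall E, reach B E -> reach E B.
Proof.
set s := msize C.
pose cnt (D : conf (rs_Q P)) := #|[set x : {ffun rs_Q P -> 'I_s.+1} | cdec (reach D (dcd x))]|.
have hex : exists k, cdec (exists D, reach C D /\ cnt D = k).
  exists (cnt C); apply/cdecP; exists C; split => //; exact: rt_refl.
case: (ex_minnP hex) => k hk hmin; move: hk => /cdecP [D [hCD hk]]; subst k.
exists D; split => // E hDE; apply: NNPP => hED.
have : cnt E < cnt D.
  apply: proper_card; apply/properP; split.
    apply/subsetP => x; rewrite !inE => /cdecP h; apply/cdecP; exact: rt_trans hDE h.
  have hsD : msize D = s by apply: reach_msize.
  exists (enc s D); rewrite !inE dcd_enc //; first by apply/cdecP; exact: rt_refl.
  by apply/cdecP.
suff : cnt D <= cnt E by lia.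
apply: hmin; apply/cdecP; exists E; split => //; exact: rt_trans hCD hDE.
Qed.

Lemma key n (P : replicated_system n) (Pi : stable_term_prop (rs_Q P)) C0 C :
  satisfies Pi -> psem (phi_pre Pi) C0 -> reach C0 C ->
  exists D, reach C D /\ exists2 phi, Stdlib.Lists.List.In phi (phi_posts Pi) &
     forall E, reach D E -> psem phi E.
Proof.
move=> hsat h0 hC.
have [B [hCB hbot]] := bottom C.
set e := eB B.
set r := mkrun e C0.
have hc i : run_conf r i = (sq e C0 i).1 by [].
have ht i : run_trans r i = (nxt e (sq e C0 i)).1 by [].
have hC0B : reach C0 B by apply: rt_trans hC hCB.
have [i0 [_ hi0 _ _ _]] : exists i', [/\ 0 <= i', (sq e C0 i').1 = B, (nxt e (sq e C0 i')).1 = (zc _, zc _),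
     (sq e C0 i'.+1).1 = B & (sq e C0 i'.+1).2 = (sq e C0 0).2.+1].
  have [k hk] := reach_rn hC0B; have [_ hd] := dist_spec hk.
  exact: (L1 (i := 0) (S := B) (t := (zc _, zc _)) (S' := B) erefl (silent_step B) hC0B hd).
have inR i : i0 <= i -> reach B (run_conf r i).
  by move=> h; rewrite -hi0; exact: (run_reach r h).
have L4 S t S' : step S t S' -> reach B S -> forall N, exists i,
    [/\ N <= i, run_conf r i = S, run_trans r i = t & run_conf r i.+1 = S'].
  move=> hs hBS N.
  set M := maxn N i0.
  set j := (2 ^ (pickle (S, t, S')) * (2 * (sq e C0 M).2).+1).+1.
  have hj : (sq e C0 M).2 <= j.
    rewrite /j; have := leq_pmull ((2 * (sq e C0 M).2).+1) (expn_gt0 2 (pickle (S, t, S'))); lia.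
  have [i [hMi hi]] := L3 e C0 (j - (sq e C0 M).2) M.
  rewrite subnKC // in hi.
  have he : e (sq e C0 i).2 = Some (S, t, S') by rewrite hi /j /e /eB logn2 pickleK.
  have hr : reach (sq e C0 i).1 S.
    apply: rt_trans (hbot _ (inR i _)) hBS; lia.
  have [k hk] := reach_rn hr; have [_ hd] := dist_spec hk.
  have [i' [a b c d _]] := L1 he hs hr hd.
  exists i'; split => //; lia.
have hfair : fair r.
  move=> S t S' hs hinf N.
  have [i [hi hiS]] := hinf (maxn N i0).
  have hBS : reach B S by rewrite -hiS; apply: inR; lia.
  have [i' [a b c d]] := L4 S t S' hs hBS N.
  by exists i'.
have [N [phi hin hphi]] := hsat r hfair h0.
exists B; split => //; exists phi => // E hBE.
have [i [a b _ _]] := L4 E _ E (silent_step E) hBE N.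
by rewrite -b; apply: hphi.
Qed.

Definition Aset n (P : replicated_system n) (Pi : stable_term_prop (rs_Q P)) (C : conf (rs_Q P)) :=
  exists C0, psem (phi_pre Pi) C0 /\ reach C0 C.

Definition stg n (P : replicated_system n) (Pi : stable_term_prop (rs_Q P)) L
   (i : 'I_L) (C : conf (rs_Q P)) : Prop :=
  match nat_of_ord i with
  | 0 => Aset Pi C
  | k.+1 => Aset Pi C /\ forall E, reach C E -> psem (List.nth k (phi_posts Pi) (PTrue _)) E
  end.

Definition edg L (i j : 'I_L) : Prop := nat_of_ord i = 0 /\ nat_of_ord j <> 0.

Lemma edg_ct L (i j : 'I_L) : clos_trans _ (@edg L) i j -> nat_of_ord i = 0 /\ nat_of_ord j <> 0.
Proof. elim=> [x y h|x y z _ [h1 _] _ [_ h2]] //. Qed.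

Definition fdist n (P : replicated_system n) (U : conf (rs_Q P) -> Prop) (C : conf (rs_Q P)) : nat :=
  match excluded_middle_informative (exists k, cdec (exists D, rn k C D /\ U D)) with
  | left H => ex_minn H | right _ => 0 end.

Lemma fdist_spec n (P : replicated_system n) U k (C D : conf (rs_Q P)) :
  rn k C D -> U D -> exists D', rn (fdist U C) C D' /\ U D' /\ fdist U C <= k.
Proof.
move=> h hU; rewrite /fdist; case: excluded_middle_informative => [H|H]; last first.
  by exfalso; apply: H; exists k; apply/cdecP; exists D.
case: (ex_minnP H) => m hm hmin; move: hm => /cdecP [D' [h1 h2]].
exists D'; split => //; split => //; apply: hmin; apply/cdecP; by exists D.
Qed.

Lemma dir2 n (P : replicated_system n) (Pi : stable_term_prop (rs_Q P)) :
  satisfies Pi -> has_stage_graph Pi.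
Proof.
move=> hsat.
case hL: (length (phi_posts Pi)) => [|L].
  exists (StageGraph n P 0 (fun _ _ => False) (fun _ _ => False)); split.
  - by case.
  - by case.
  - move=> C0 h0.
    have [D [_ [phi hin _]]] := key hsat h0 (rt_refl _ _ C0).
    by destruct (phi_posts Pi); [|done].
  - by case.
  - by case.
exists (StageGraph n P L.+2 (@stg n P Pi L.+2) (@edg L.+2)); split.
- move=> i /edg_ct [h1 h2]; exact: h2 h1.
- case=> [[|k] hk] /= C C' hC hs; rewrite /stg /= in hC *.
  + case: hC => C0 [h0 h1]; exists C0; split => //; apply: rt_trans h1 (rt_step _ _ _ _ hs).
  + case: hC => [[C0 [h0 h1]] h2]; split.
      exists C0; split => //; apply: rt_trans h1 (rt_step _ _ _ _ hs).
    move=> E hE; apply: h2; apply: rt_trans (rt_step _ _ _ _ hs) hE.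
- move=> C h0; exists ord0; rewrite /stg /=; exists C; split => //; exact: rt_refl.
- move=> i [j [hi hj]].
  set U := (fun C => exists j, edg i j /\ stg Pi j C).
  exists (fdist U) => C hC hnU.
  have hA : Aset Pi C by move: hC; rewrite /= /stg hi.
  have [C0 [h0 hC0]] := hA.
  have [D [hCD [phi hin hphi]]] := key hsat h0 hC0.
  have [k [hk hkphi]] := List.In_nth _ _ (PTrue _) hin.
  have hk' : k.+1 < L.+2 by rewrite hL in hk; apply/ltP; lia.
  have hUD : U D.
    exists (Ordinal hk'); split; first by split => //=.
    rewrite /stg /=; split.
      by exists C0; split => //; apply: rt_trans hC0 hCD.
    by rewrite hkphi.
  have [m hm] := reach_rn hCD.
  have [D' [h1 [h2 _]]] := fdist_spec hm hUD.
  move: h1; case hf: (fdist U C) => [|m'] /=.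
    by move=> hCD'; subst D'.
  move=> [E [hCE hE]].
  have [D'' [_ [_ hle]]] := fdist_spec hE h2.
  exists E; split.
  + exact: rt_step.
  + rewrite /stg hi; case: hA => C1 [h3 h4]; exists C1; split => //; exact: rt_trans h4 (rt_step _ _ _ _ hCE).
  + lia.
- case=> [[|k] hk] hterm.
    exfalso; apply: (hterm (@Ordinal L.+2 1 erefl)); by split.
  have hk' : (k < length (phi_posts Pi))%coq_nat by rewrite hL; apply/ltP.
  exists (List.nth k (phi_posts Pi) (PTrue _)); first exact: List.nth_In.
  by move=> C; rewrite /stg /= => -[_ h]; apply: h; exact: rt_refl.
Qed.

Unset Implicit Arguments.
Theorem proposition3 (n : nat) (P : replicated_system n)
    (Pi : stable_term_prop (rs_Q P)) :
  satisfies Pi <-> has_stage_graph Pi.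
Proof.
split; first exact: dir2.
by case=> G hG; exact: dir1 hG.
Qed.
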